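(* Let $K\ge2$. Then for all $x,y\in\mathbb{R}^K$, $\|\mathrm{softmax}(x)-\mathrm{softmax}(y)\|_2\le L_K\|x-y\|_2$ with a constant $L_K\le\frac{K-1}{K}$.
   Context: $\mathrm{softmax}:\mathbb{R}^K\to\mathbb{R}^K$, $\{\mathrm{softmax}(x)\}_i=e^{x_i}/\sum_{j=1}^Ke^{x_j}$; $\|\cdot\|_2$ is the Euclidean norm. *)

(* Defs.v *)
From HB Require Import structures.
From mathcomp Require Import all_boot all_order all_algebra.
From mathcomp Require Import reals.
From mathcomp Require Import sequences exp.
Set Implicit Arguments. Unset Strict Implicit. Unset Printing Implicit Defensive.
Import Order.TTheory GRing.Theory Num.Theory.
Local Open Scope ring_scope.

Definition softmax (R : realType) (K : nat) (x : 'rV[R]_K) : 'rV[R]_K :=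
  \row_(i < K) (expR (x 0 i) / \sum_(j < K) expR (x 0 j)).

Definition norm2 (R : realType) (K : nat) (x : 'rV[R]_K) : R :=
  Num.sqrt (\sum_(i < K) (x 0 i) ^+ 2).

(* Main.v *)
Require Import Defs.
From HB Require Import structures.
From mathcomp Require Import all_boot all_order all_algebra.
From mathcomp Require Import reals.
From mathcomp Require Import sequences exp.
From mathcomp Require Import all_classical.
From mathcomp Require Import topology normedtype derive realfun.
From mathcomp Require Import ring lra.
Import Order.TTheory GRing.Theory Num.Theory.
Import numFieldNormedType.Exports.
Local Open Scope ring_scope.
Local Open Scope classical_set_scope.
Section C.
Variable R : realFieldType.
Variable n : nat.
Variable p : 'I_n -> R.
Hypothesis p0 : forall i, 0 <= p i.
Hypothesis p1 : \sum_i p i = 1.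

Lemma inner (u w : 'I_n -> R) i :
  \sum_j p i * p j * ((u i - u j) * (w i - w j)) =
  p i * u i * w i - p i * u i * (\sum_j p j * w j) - p i * w i * (\sum_j p j * u j)
  + p i * (\sum_j p j * u j * w j).
Proof.
rewrite -[p i * u i * w i]mulr1 -p1 !mulr_sumr -!sumrB -big_split.
by apply: eq_bigr => j _; rewrite /=; ring.
Qed.

Lemma dbl (u w : 'I_n -> R) :
  \sum_i \sum_j p i * p j * ((u i - u j) * (w i - w j)) =
  2 * (\sum_i p i * u i * w i - (\sum_i p i * u i) * (\sum_i p i * w i)).
Proof.
under eq_bigr do rewrite inner.
rewrite big_split /= !sumrB -!mulr_suml p1 mul1r.
rewrite /=; ring.
Qed.

Lemma sum_scal (G : 'I_n -> R) (c : R) (F : 'I_n -> R) :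
  (forall i, F i = c * G i) -> \sum_i F i = c * \sum_i G i.
Proof. by move=> H; rewrite mulr_sumr; apply: eq_bigr => i _. Qed.

Lemma term_bound (a b vi vj di dj : R) :
  2 * a * b * ((vi - vj) * (di - dj)) <=
  2 * ((b ^+ 2 * vi ^+ 2 + a ^+ 2 * di ^+ 2) + (b ^+ 2 * vj ^+ 2 + a ^+ 2 * dj ^+ 2)).
Proof.
have h1 : 0 <= (b * (vi - vj) - a * (di - dj)) ^+ 2 by apply: sqr_ge0.
have h2 : 0 <= (vi + vj) ^+ 2 by apply: sqr_ge0.
have h3 : 0 <= (di + dj) ^+ 2 by apply: sqr_ge0.
have h4 : 0 <= b ^+ 2 * (vi + vj) ^+ 2 by apply: mulr_ge0 => //; apply: sqr_ge0.
have h5 : 0 <= a ^+ 2 * (di + dj) ^+ 2 by apply: mulr_ge0 => //; apply: sqr_ge0.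
nra.
Qed.

Lemma cov_bound (v d : 'I_n -> R) (a b : R) :
  4 * a * b * (\sum_i p i * v i * d i - (\sum_i p i * v i) * (\sum_i p i * d i))
  <= b ^+ 2 * (\sum_i v i ^+ 2) + a ^+ 2 * (\sum_i d i ^+ 2).
Proof.
pose w i := b ^+ 2 * v i ^+ 2 + a ^+ 2 * d i ^+ 2.
have w0 i : 0 <= w i by rewrite /w addr_ge0 // mulr_ge0 // sqr_ge0.
have -> : 4 * a * b * (\sum_i p i * v i * d i - (\sum_i p i * v i) * (\sum_i p i * d i))
   = \sum_i \sum_j p i * p j * (2 * a * b * ((v i - v j) * (d i - d j))).
  set C := (X in 4 * a * b * X).
  have -> : 4 * a * b * C = 2 * a * b * (2 * C) by rewrite /=; ring.
  rewrite /C -dbl mulr_sumr; apply: eq_bigr => i _.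
  rewrite mulr_sumr; apply: eq_bigr => j _; rewrite /=; ring.
have step i : \sum_j p i * p j * (2 * a * b * ((v i - v j) * (d i - d j)))
   <= \sum_j 2 * p i * p j * (w i + w j) - 4 * p i ^+ 2 * w i.
  rewrite (bigD1 i) //= [X in _ <= X - _](bigD1 i) //= !subrr !mulr0 add0r.
  have -> : 2 * p i * p i * (w i + w i) = 4 * p i ^+ 2 * w i by ring.
  rewrite addrAC subrr add0r; apply: ler_sum => j _.
  have -> : 2 * p i * p j * (w i + w j) = p i * p j * (2 * (w i + w j)) by ring.
  apply: ler_wpM2l; first exact: mulr_ge0.
  exact: term_bound.
apply: le_trans (ler_sum _ (fun i _ => step i)) _.
have -> : \sum_i (\sum_j 2 * p i * p j * (w i + w j) - 4 * p i ^+ 2 * w i)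
   = \sum_i (4 * p i * (1 - p i) * w i).
  pose W := \sum_j p j * w j.
  have -> : \sum_i (4 * p i * (1 - p i) * w i) =
     \sum_i ((2 * p i * w i + 2 * p i * W) - 4 * p i ^+ 2 * w i).
    rewrite !sumrB big_split /=.
    rewrite (sum_scal (fun i => p i * w i - p i ^+ 2 * w i) 4 (fun i => 4 * p i * (1 - p i) * w i)); last by move=> i; ring.
    rewrite (sum_scal (fun i => p i * w i) 2 (fun i => 2 * p i * w i)); last by move=> i; ring.
    rewrite (sum_scal (fun i => p i) (2 * W) (fun i => 2 * p i * W)); last by move=> i; ring.
    rewrite (sum_scal (fun i => p i ^+ 2 * w i) 4 (fun i => 4 * p i ^+ 2 * w i)); last by move=> i; ring.
    by rewrite sumrB p1 /W /=; ring.
  apply: eq_bigr => i _; congr (_ - _).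
  rewrite (eq_bigr (fun j => 2 * p i * w i * p j + 2 * p i * (p j * w j))).
    by rewrite big_split /= -mulr_sumr -mulr_sumr p1 mulr1.
  by move=> j _; ring.
have -> : b ^+ 2 * (\sum_i v i ^+ 2) + a ^+ 2 * (\sum_i d i ^+ 2) = \sum_i w i.
  by rewrite !mulr_sumr -big_split.
apply: ler_sum => i _.
have hp : 4 * p i * (1 - p i) <= 1.
  have := sqr_ge0 (2 * p i - 1); nra.
rewrite -[X in _ <= X]mul1r; apply: ler_wpM2r => //.
Qed.
End C.

Section S.
Variable R : realType.
Variable K : nat.

Lemma derM (f g : R -> R) (x df dg : R) : is_derive x 1 f df -> is_derive x 1 g dg ->
  is_derive x 1 (fun t => f t * g t) (f x * dg + g x * df).
Proof. move=> Hf Hg; exact: (is_deriveM Hf Hg). Qed.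

Lemma derV (f : R -> R) (x df : R) : f x != 0 -> is_derive x 1 f df ->
  is_derive x 1 (fun t => (f t)^-1) (- (f x) ^- 2 * df).
Proof. move=> H Hf; exact: (is_deriveV H Hf). Qed.

Lemma derS n (h : 'I_n -> R -> R) (x : R) (dh : 'I_n -> R) : (forall i, is_derive x 1 (h i) (dh i)) ->
  is_derive x 1 (fun t => \sum_(i < n) h i t) (\sum_(i < n) dh i).
Proof. move=> H; have := is_derive_sum H; by rewrite fct_sumE. Qed.

Arguments derM [f g x df dg].
Arguments derV [f x df].
Arguments derS [n h x dh].

Lemma derAff (a b x : R) : is_derive x 1 (fun t => a + t * b) b.
Proof.
have H := is_deriveD (is_derive_cst a x 1) (is_deriveZ b (is_derive_id x 1)).
have E : (cst a + b *: id) = (fun t : R => a + t * b) :> (R -> R).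
  by apply/funext => t /=; rewrite mulrC.
rewrite -E; apply: is_derive_eq H _.
by rewrite add0r; exact: mulr1.
Qed.

Lemma softmax_lip (x y : 'rV[R]_K) (hK : (0 < K)%N) :
  norm2 (softmax x - softmax y) <= 2^-1 * norm2 (x - y).
Proof.
pose v i := softmax x 0 i - softmax y 0 i.
pose d i := x 0 i - y 0 i.
have -> : norm2 (softmax x - softmax y) = Num.sqrt (\sum_i v i ^+ 2).
  rewrite /norm2 (eq_bigr (fun i => v i ^+ 2)) // => i _; by rewrite /v !mxE.
have -> : norm2 (x - y) = Num.sqrt (\sum_i d i ^+ 2).
  rewrite /norm2 (eq_bigr (fun i => d i ^+ 2)) // => i _; by rewrite !mxE.
pose e i (t : R) := expR (y 0 i + t * d i).
pose S t := \sum_i e i t.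
have S0 t : 0 < S t.
  rewrite /S (bigD1 (Ordinal hK)) //=; apply: ltr_pwDl; first exact: expR_gt0.
  by apply: sumr_ge0 => i _; exact: expR_ge0.
pose g t := \sum_i v i * (e i t * (S t)^-1).
pose dS t := \sum_j e j t * d j.
pose dg t := \sum_i v i * (e i t * (- (S t) ^- 2 * dS t) + (S t)^-1 * (e i t * d i)).
have he (t : R) j : is_derive t 1 (e j) (e j t * d j).
  exact: (is_derive1_comp (is_derive_expR _) (derAff (y 0 j) (d j) t)).
have Hd (t : R) : is_derive t 1 g (dg t).
  apply: derS => i.
  have hv := is_derive_cst (v i) t 1.
  have hS : is_derive t 1 S (dS t) := derS (he t).
  have hSV := derV (lt0r_neq0 (S0 t)) hS.
  have hq := derM (he t i) hSV.
  apply: is_derive_eq (derM hv hq) _.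
  by rewrite mulr0 addr0.
have cont : {within `[0, 1], continuous g}.
  by apply: derivable_within_continuous => t _; case: (Hd t).
have [c _ Hc] := MVT_segment ler01 (fun t _ => Hd t) cont.
have E1 j : y 0 j + 1 * d j = x 0 j by rewrite /d mul1r addrC subrK.
have E0 j : y 0 j + 0 * d j = y 0 j by rewrite mul0r addr0.
have sx i : e i 1 / S 1 = softmax x 0 i.
  rewrite /S /e mxE (E1 i); congr (_ / _); apply: eq_bigr => j _; by rewrite E1.
have sy i : e i 0 / S 0 = softmax y 0 i.
  rewrite /S /e mxE (E0 i); congr (_ / _); apply: eq_bigr => j _; by rewrite E0.
have g1 : g 1 - g 0 = \sum_i v i ^+ 2.
  rewrite /g -sumrB; apply: eq_bigr => i _.
  by rewrite sx sy -mulrBr expr2.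
pose p i := e i c / S c.
have Sc : S c != 0 := lt0r_neq0 (S0 c).
have dSS : dS c / S c = \sum_j p j * d j.
  rewrite /dS mulr_suml; apply: eq_bigr => j _; rewrite /p /=; ring.
have dgc : dg c = \sum_i p i * v i * d i - (\sum_i p i * v i) * (\sum_i p i * d i).
  rewrite /dg (eq_bigr (fun i => p i * v i * d i - p i * v i * (dS c / S c))); last first.
    by move=> i _; rewrite /p /=; field.
  by rewrite sumrB -mulr_suml dSS.
have p0 i : 0 <= p i by rewrite /p divr_ge0 // ?expR_ge0 // ltW.
have p1 : \sum_i p i = 1 by rewrite /p -mulr_suml divff.
rewrite g1 dgc subr0 mulr1 in Hc.
set A := Num.sqrt (\sum_i v i ^+ 2).
set D := Num.sqrt (\sum_i d i ^+ 2).
have hA2 : A ^+ 2 = \sum_i v i ^+ 2 by rewrite sqr_sqrtr // sumr_ge0 // => i _; exact: sqr_ge0.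
have hD2 : D ^+ 2 = \sum_i d i ^+ 2 by rewrite sqr_sqrtr // sumr_ge0 // => i _; exact: sqr_ge0.
have A0 : 0 <= A := sqrtr_ge0 _.
have D0 : 0 <= D := sqrtr_ge0 _.
have hb := @cov_bound R K p p0 p1 v d A D.
rewrite -Hc -hA2 -hD2 in hb.
have [Dz|Dpos] := eqVneq D 0.
  have dz i : d i = 0.
    move: Dz; rewrite /D => /eqP; rewrite sqrtr_eq0 => hle.
    have h0 : \sum_i d i ^+ 2 = 0.
      by apply/le_anti; rewrite hle sumr_ge0 // => j _; exact: sqr_ge0.
    have := @psumr_eq0P R _ xpredT (fun j => d j ^+ 2) (fun j _ => sqr_ge0 (d j)) h0 i isT.
    by move/eqP; rewrite sqrf_eq0 => /eqP.
  have : A ^+ 2 = 0.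
    rewrite hA2 Hc [X in X - _]big1; last by move=> i _; rewrite dz mulr0.
    rewrite [X in _ * X]big1 ?mulr0 ?subrr // => i _; by rewrite dz mulr0.
  move/eqP; rewrite sqrf_eq0 => /eqP ->; rewrite Dz mulr0.
  done.
have [Az|Apos] := eqVneq A 0.
  by rewrite Az mulr_ge0 // invr_ge0.
have Ap : 0 < A by rewrite lt_def Apos A0.
have Dp : 0 < D by rewrite lt_def Dpos D0.
have h2 : 0 < A ^+ 2 * D by rewrite mulr_gt0 // exprn_gt0.
nra.
Qed.
End S.



Theorem lemma6 (R : realType) (K : nat) (hK : (2 <= K)%N) :
  exists L_K : R, L_K <= (K.-1)%:R / K%:R /\
    forall x y : 'rV[R]_K,
      norm2 (softmax x - softmax y) <= L_K * norm2 (x - y).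
Proof.
exists 2^-1; split; last first.
  by move=> x y; apply: softmax_lip; apply: leq_trans hK.
case: K hK => [|[|k]] // _ /=.
rewrite ler_pdivlMr ?ltr0Sn //.
rewrite -[k.+2]addn2 -[k.+1]addn1 !natrD.
have := ler0n R k; lra.
Qed.
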